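(* Let $Z$ be an extremal assignment of order $n$. For each $G\in S_2(n)$ with $Z(G)\neq\emptyset$, let $B_G$ be the set of labels of the leaves adjacent to the (unique) assigned vertex of $G$. Then $\mathcal{C}=\{B_G: G\in S_2(n),\ Z(G)\ne\emptyset\}$ is a contraction indicator.
   Context: $[n]=\{1,\dots,n\}$. A stable $n$-labeled tree is a finite tree with $n$ leaves labeled bijectively by $[n]$, all internal vertices of degree $\ge 3$; $V(G)$ its internal vertices; $S(n)$ the set of such trees up to label-preserving isomorphism and $S_2(n)$ those with exactly 2 internal vertices. $G\rightsquigarrow G'$: $G'$ obtained by collapsing connected sets of internal vertices, inducing surjection $\pi:V(G)\to V(G')$. An extremal assignment of order $n$: rule $Z(G)\subset V(G)$ for $G\in S(n)$ with (a) $Z(G)\ne V(G)$, (b) if $G\rightsquigarrow G'$ and $\pi^{-1}(v')=\{v_1,\dots,v_k\}$ then $v'\in Z(G')\iff v_1,\dots,v_k\in Z(G)$. A contraction indicator is a collection $\mathcal{C}$ of subsets of $[n]$ such that (1) $2\le|B|\le n-2$ for every $B\in\mathcal{C}$; (2) if $B\in\mathcal{C}$ and $B'\subset B$ with $|B'|\ge 2$ then $B'\in\mathcal{C}$; (3) $B_1\cup B_2\ne[n]$ for all $B_1,B_2\in\mathcal{C}$. *)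

(* Defs.v *)
From mathcomp Require Import all_boot.
Set Implicit Arguments. Unset Strict Implicit. Unset Printing Implicit Defensive.

(* A concrete n-labeled graph with k internal vertices: vertex type
   'I_n + 'I_k (inl i = leaf labeled i.+1, inr v = internal vertex v),
   edge relation e. *)
Definition vtx (n k : nat) := ('I_n + 'I_k)%type.

(* G is a stable n-labeled tree: simple graph (symmetric, irreflexive),
   a tree (connected with |E| = |V| - 1; ordered pairs are counted twice),
   leaves of degree 1, internal vertices of degree >= 3. *)
Definition stable_tree (n k : nat) (e : rel (vtx n k)) : Prop :=
  [/\ symmetric e /\ irreflexive e,
      (forall x y : vtx n k, connect e x y),
      #|[set p : vtx n k * vtx n k | e p.1 p.2]| = (2 * (n + k) - 2)%N,
      (forall i : 'I_n, #|[set y | e (inl i) y]| = 1%N) &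
      (forall v : 'I_k, 3 <= #|[set y | e (inr v) y]|)].

Definition vmap (n k k' : nat) (pi : 'I_k -> 'I_k') (x : vtx n k) : vtx n k' :=
  match x with inl i => inl i | inr v => inr (pi v) end.

Definition contraction (n k k' : nat) (e : rel (vtx n k)) (e' : rel (vtx n k'))
    (pi : 'I_k -> 'I_k') : Prop :=
  [/\ (forall v' : 'I_k', exists v, pi v = v'),
      (forall v w : 'I_k, pi v = pi w ->
         connect [rel x y | [&& e x y,
                               (if x is inr a then pi a == pi v else false) &
                               (if y is inr b then pi b == pi v else false)]]
                 (inr v) (inr w)) &
      (forall a' b' : vtx n k',
         e' a' b' <-> (a' != b' /\
            exists a b, [/\ vmap (n:=n) pi a = a', vmap (n:=n) pi b = b' & e a b]))].

(* An assignment: for each concrete graph (k, e) a set of internal vertices.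
   Only its values on stable trees matter. *)
Definition assignment (n : nat) := forall k : nat, rel (vtx n k) -> {set 'I_k}.

Definition extremal_assignment (n : nat) (Z : assignment n) : Prop :=
  (forall k (e : rel (vtx n k)), stable_tree e -> Z k e != setT) /\
  (forall k k' (e : rel (vtx n k)) (e' : rel (vtx n k')) (pi : 'I_k -> 'I_k'),
     stable_tree e -> stable_tree e' -> contraction e e' pi ->
     forall v' : 'I_k',
       (v' \in Z k' e') = [forall v : 'I_k, (pi v == v') ==> (v \in Z k e)]).

Definition contraction_indicator (n : nat) (C : {set 'I_n} -> Prop) : Prop :=
  [/\ (forall B : {set 'I_n}, C B -> 2 <= #|B| <= n - 2),
      (forall B B' : {set 'I_n}, C B -> B' \subset B -> 2 <= #|B'| -> C B') &
      (forall B1 B2 : {set 'I_n}, C B1 -> C B2 -> B1 :|: B2 != setT)].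

Definition C_of (n : nat) (Z : assignment n) (B : {set 'I_n}) : Prop :=
  exists (e : rel (vtx n 2)) (v : 'I_2),
    [/\ stable_tree e, Z 2 e != set0, v \in Z 2 e &
        B = [set i : 'I_n | e (inl i) (inr v)]].

(* Main.v *)
Require Import Defs.
From mathcomp Require Import all_boot.
From Stdlib Require Import FunctionalExtensionality.
From mathcomp Require Import zify.
Set Implicit Arguments. Unset Strict Implicit. Unset Printing Implicit Defensive.
Definition pth (k : nat) (a b : 'I_k) : bool := (a.+1 == b) || (b.+1 == a).
Definition ptree (n k : nat) (f : 'I_n -> 'I_k) : rel (vtx n k) :=
  fun x y => match x, y with
  | inl i, inr w => f i == w
  | inr w, inl i => f i == w
  | inr a, inr b => pth a b
  | _, _ => false end.

Lemma card_sum (T : finType) (P : pred T) : #|[set y | P y]| = \sum_y (P y : nat).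
Proof.
rewrite -sum1_card big_mkcond /=; apply: eq_bigr => y _; rewrite inE; by case: (P y).
Qed.

Lemma connect_map (T U : finType) (r : rel T) (s : rel U) (h : T -> U) :
  (forall a b, r a b -> s (h a) (h b)) -> forall a b, connect r a b -> connect s (h a) (h b).
Proof.
move=> H a b /connectP [p]; elim: p a => [|c p IH] a /=; first by move=> _ ->.
case/andP=> rac pc eb; apply: connect_trans (connect1 (H _ _ rac)) (IH _ pc eb).
Qed.

Lemma pth_sym k : symmetric (@pth k).
Proof. by move=> a b; rewrite /pth orbC. Qed.

Lemma ptree_sym n k (f : 'I_n -> 'I_k) : symmetric (ptree f).
Proof. move=> [i|a] [j|b] //=; exact: pth_sym. Qed.

Lemma ptree_irr n k (f : 'I_n -> 'I_k) : irreflexive (ptree f).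
Proof. move=> [i|a] //=; by rewrite /pth orbb eqn_leq ltnn. Qed.

Lemma sum_eq1 k (w : 'I_k) : \sum_(a < k) (w == a : nat) = 1.
Proof.
rewrite (bigD1 w) //= eqxx big1 // => a /negbTE; by rewrite eq_sym => ->.
Qed.

Lemma ptree_stable n k (f : 'I_n -> 'I_k.+1)
 (Hpath : \sum_(a < k.+1) \sum_(b < k.+1) (pth a b : nat) = 2 * k)
 (Hdeg : forall w, 3 <= #|[set i | f i == w]| + \sum_b (pth w b : nat)) :
 stable_tree (ptree f).
Proof.
have Hs := ptree_sym f.
have Hcs : connect_sym (ptree f) := sym_connect_sym Hs.
split.
- by split; [exact: Hs | exact: ptree_irr].
- have Hin : forall m (Hm : m < k.+1), connect (ptree f) (inr (Ordinal Hm)) (inr ord0).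
    elim=> [|m IH] Hm.
      by have -> : Ordinal Hm = ord0 by exact: val_inj.
    have Hm' : m < k.+1 by exact: ltnW.
    apply: connect_trans (IH Hm'); apply: connect1 => /=; by rewrite /pth /= eqxx orbT.
  have Hall : forall x, connect (ptree f) x (inr ord0).
    case=> [i|[m Hm]]; last exact: Hin.
    apply: connect_trans (connect1 _) _; first (by exact: (eqxx (f i) : ptree f (inl i) (inr (f i)))).
    by case: (f i) => m Hm; exact: Hin.
  move=> x y; apply: connect_trans (Hall x) _; by rewrite Hcs.
- rewrite card_sum.
  transitivity (\sum_x \sum_y (ptree f x y : nat)).
    by rewrite pair_bigA.
  rewrite big_sumType /=.
  under eq_bigr => i _ do rewrite big_sumType /= big1 // add0n sum_eq1.
  under [X in _ + X = _]eq_bigr => a _ do rewrite big_sumType /=.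
  rewrite big_split /= exchange_big /=.
  rewrite (eq_bigr (fun _ => 1)); last by move=> j _; rewrite -(sum_eq1 (f j)); apply: eq_bigr.
  rewrite Hpath !sum1_card card_ord (eq_bigr (fun _ => 1)); last by move=> j _; rewrite -(sum_eq1 (f j)); apply: eq_bigr.
  rewrite sum1_card card_ord; lia.
- move=> i; rewrite card_sum big_sumType /= big1 // add0n; exact: sum_eq1.
- move=> w; rewrite card_sum big_sumType /=; move: (Hdeg w); by rewrite card_sum.
Qed.

Definition o30 : 'I_3 := @Ordinal 3 0 isT.
Definition o31 : 'I_3 := @Ordinal 3 1 isT.
Definition o32 : 'I_3 := @Ordinal 3 2 isT.
Definition o20 : 'I_2 := @Ordinal 2 0 isT.
Definition o21 : 'I_2 := @Ordinal 2 1 isT.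
Lemma ord2 (v : 'I_2) : v = o20 \/ v = o21.
Proof. case: v => [[|[|m]] H]; [left|right|by []]; exact: val_inj. Qed.
Lemma ord3 (v : 'I_3) : [\/ v = o30, v = o31 | v = o32].
Proof. case: v => [[|[|[|m]]] H]; [constructor 1|constructor 2|constructor 3|by []]; exact: val_inj. Qed.
Ltac enum3 v := case: (ord3 v) => ->.
Ltac enum2 v := case: (ord2 v) => ->.

Definition g2 n (e : rel (vtx n 2)) (i : 'I_n) : 'I_2 := if e (inl i) (inr o20) then o20 else o21.

Lemma neq01 n : (inr o20 : vtx n 2) <> inr o21.
Proof. by move=> H; have := congr1 (fun x : vtx n 2 => if x is inr a then val a else 0) H. Qed.

Lemma nf n (e : rel (vtx n 2)) : stable_tree e -> e = ptree (g2 e).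
Proof.
case=> [[Hs Hirr] Hc _ Hleaf _].
have Hcs := sym_connect_sym Hs.
have uniq : forall i y z, e (inl i) y -> e (inl i) z -> y = z.
  move=> i y z; have /eqP/cards1P [y0 Hy0] := Hleaf i.
  have H : forall u, e (inl i) u = (u == y0).
    by move=> u; move/setP: Hy0 => /(_ u); rewrite !inE.
  by rewrite !H => /eqP -> /eqP ->.
have LL : forall i j, e (inl i) (inl j) = false.
  move=> i j; apply/negP => Hij.
  pose S := [pred x : vtx n 2 | (x == inl i) || (x == inl j)].
  have cS : closed e S.
    apply: (intro_closed Hcs) => x z Hxz; rewrite !inE => /orP [] /eqP ?; subst x.
    - by rewrite (uniq _ _ _ Hxz Hij) eqxx orbT.
    - have Hji : e (inl j) (inl i) by rewrite Hs.
      by rewrite (uniq _ _ _ Hxz Hji) eqxx.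
  by have := closed_connect cS (Hc (inl i) (inr o20)); rewrite !inE eqxx.
have LR : forall i, e (inl i) (inr o21) = ~~ e (inl i) (inr o20).
  move=> i; have /eqP/cards1P [y0 Hy0] := Hleaf i.
  have Hy : e (inl i) y0 by move/setP: Hy0 => /(_ y0); rewrite !inE eqxx.
  case: y0 Hy {Hy0} => [j|w] Hy; first by rewrite LL in Hy.
  case: (ord2 w) Hy => -> Hy.
  - rewrite Hy /=; apply/negP => H; exact: (neq01 (uniq _ _ _ Hy H)).
  - rewrite Hy; symmetry; apply/negP => H; exact: (neq01 (uniq _ _ _ H Hy)).
have II : e (inr o20) (inr o21).
  apply/negPn/negP => H0.
  pose S := [pred x : vtx n 2 | if x is inl i then e (inl i) (inr o20) else x == inr o20].
  have cS : closed e S.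
    apply: (intro_closed Hcs) => x z Hxz; case: x Hxz => [i|a] Hxz; rewrite inE /= => Hx.
    - by rewrite (uniq _ _ _ Hxz Hx) inE /= eqxx.
    - move/eqP: Hx => [?]; subst a.
      case: z Hxz => [j|b] Hxz; rewrite inE /=; first by rewrite Hs.
      by case: (ord2 b) Hxz => -> Hxz //; rewrite Hxz in H0.
  by have := closed_connect cS (Hc (inr o20) (inr o21)); rewrite !inE /= eqxx.
apply: functional_extensionality => x; apply: functional_extensionality => y.
case: x => [i|a]; case: y => [j|b] /=.
- exact: LL.
- rewrite /g2; enum2 b; [|rewrite LR]; by case: (e (inl i) (inr o20)).
- rewrite Hs /g2; enum2 a; [|rewrite LR]; by case: (e (inl j) (inr o20)).
- enum2 a; enum2 b; rewrite ?Hirr //; by rewrite Hs II.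
Qed.

Lemma ptree_contr n k k' (f : 'I_n -> 'I_k) (pi : 'I_k -> 'I_k') :
 (forall v', exists v, pi v = v') ->
 (forall v w, pi v = pi w -> connect [rel a b : 'I_k | [&& pth a b, pi a == pi v & pi b == pi v]] v w) ->
 (forall a' b', pth a' b' <-> (a' != b' /\ exists a b, [/\ pi a = a', pi b = b' & pth a b])) ->
 contraction (ptree f) (ptree (fun i => pi (f i))) pi.
Proof.
move=> H1 H2 H3; split => //.
- move=> v w /H2; apply: (connect_map (h := inr)) => a b //.
- case=> [i|a'] [j|b'] /=.
  + by split=> // [[_ [[a|a] [[b|b] [] //=]]]].
  + split.
    * move=> /eqP <-; split=> //; by exists (inl i), (inr (f i)); split=> //=.
    * case=> _ [[a|a] [[b|b] [] //=]] [->] [<-] /eqP ->; exact: eqxx.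
  + split.
    * move=> /eqP <-; split=> //; by exists (inr (f j)), (inl j); split=> //=.
    * case=> _ [[a|a] [[b|b] [] //=]] [<-] [->] /eqP ->; exact: eqxx.
  + rewrite H3; split.
    * case=> ne [a [b [Ha Hb Hab]]]; split; first by apply: contra ne => /eqP [->].
      by exists (inr a), (inr b); rewrite /= Ha Hb.
    * case=> ne [[x|a] [[y|b] [Ha Hb Hab]]] //; move: Ha Hb Hab => /= [Ha] [Hb] Hab.
      rewrite -Ha -Hb; split; last by exists a, b.
      by apply: contra ne; rewrite Ha Hb => /eqP ->.
Qed.

Definition other (v : 'I_2) : 'I_2 := if v == o20 then o21 else o20.
Definition pA (v : 'I_2) (u : 'I_3) : 'I_2 := if u == o30 then other v else v.
Definition pB (v : 'I_2) (u : 'I_3) : 'I_2 := if u == o32 then other v else v.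
Definition sw (v1 v2 : 'I_2) (u : 'I_2) : 'I_2 := if u == v1 then other v2 else v2.

Lemma other_eq (x v : 'I_2) : (x == other v) = (x != v).
Proof. by enum2 x; enum2 v. Qed.
Lemma other_neq (v : 'I_2) : (other v == v) = false.
Proof. by enum2 v. Qed.

Ltac surj_tac := let x := fresh "x" in intro x; first [enum2 x|enum3 x];
  first [ (exists o30; reflexivity) | (exists o31; reflexivity) | (exists o32; reflexivity)
        | (exists o20; reflexivity) | (exists o21; reflexivity)].
Ltac conn_tac := let a := fresh "a" in let b := fresh "b" in let H := fresh "H" in intros a b; first [enum3 a; enum3 b|enum2 a; enum2 b]; intro H;
 first [exact: connect0 | (apply: connect1; reflexivity) | (let E := fresh in pose proof (congr1 val H) as E; simpl in E; discriminate E)].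
Ltac edge_tac := let a := fresh "a" in let b := fresh "b" in intros a b; enum2 a; enum2 b; split;
 first [ (let H := fresh in intro H; discriminate H) | (let H := fresh in intros [H _]; discriminate H) | (intros _; reflexivity) | intros _; split; [reflexivity|] ];
 first [ (exists o30, o31; split; reflexivity) | (exists o31, o30; split; reflexivity)
       | (exists o31, o32; split; reflexivity) | (exists o32, o31; split; reflexivity)
       | (exists o20, o21; split; reflexivity) | (exists o21, o20; split; reflexivity)].

Lemma contrA n (f : 'I_n -> 'I_3) v : contraction (ptree f) (ptree (fun i => pA v (f i))) (pA v).
Proof. apply: ptree_contr; enum2 v; [surj_tac|surj_tac|conn_tac|conn_tac|edge_tac|edge_tac]. Qed.
Lemma contrB n (f : 'I_n -> 'I_3) v : contraction (ptree f) (ptree (fun i => pB v (f i))) (pB v).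
Proof. apply: ptree_contr; enum2 v; [surj_tac|surj_tac|conn_tac|conn_tac|edge_tac|edge_tac]. Qed.
Lemma contrS n (f : 'I_n -> 'I_2) v1 v2 : contraction (ptree f) (ptree (fun i => sw v1 v2 (f i))) (sw v1 v2).
Proof. apply: ptree_contr; enum2 v1; enum2 v2; first [surj_tac|conn_tac|edge_tac]. Qed.

Lemma deg_inr n k (f : 'I_n -> 'I_k) w :
  #|[set y | ptree f (inr w) y]| = #|[set i | f i == w]| + \sum_b (pth w b : nat).
Proof. by rewrite !card_sum big_sumType. Qed.

Lemma stable2 n (g : 'I_n -> 'I_2) :
  2 <= #|[set i | g i == o20]| -> 2 <= #|[set i | g i == o21]| -> stable_tree (ptree g).
Proof.
move=> H0 H1; apply: ptree_stable.
  by rewrite !big_ord_recl !big_ord0.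
move=> w; rewrite !big_ord_recl big_ord0; enum2 w; rewrite /=.
- by rewrite !(addn0, add0n) addn1.
- by rewrite !(addn0, add0n) addn1.
Qed.

Lemma stable2_inv n (g : 'I_n -> 'I_2) w : stable_tree (ptree g) -> 2 <= #|[set i | g i == w]|.
Proof.
case=> _ _ _ _ /(_ w); rewrite deg_inr !big_ord_recl big_ord0; enum2 w => /=; by rewrite addn1.
Qed.

Definition mk3 n (P Q : pred 'I_n) (i : 'I_n) : 'I_3 :=
  if P i then o30 else if Q i then o32 else o31.

Lemma stable3 n (P Q : pred 'I_n) :
  2 <= #|[set i | P i]| -> 2 <= #|[set i | ~~ P i && Q i]| -> 0 < #|[set i | ~~ P i && ~~ Q i]| ->
  stable_tree (ptree (mk3 P Q)).
Proof.
move=> H0 H2 H1; apply: ptree_stable.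
  by rewrite !big_ord_recl !big_ord0.
move=> w; rewrite !big_ord_recl big_ord0; enum3 w; rewrite /= !(addn0, add0n) ?addn1 ?ltnS.
- apply: leq_trans H0 _; apply: subset_leq_card; apply/subsetP => i.
  by rewrite !inE /mk3; case: (P i).
- rewrite addn2 ltnS; apply: leq_trans H1 _; apply: subset_leq_card; apply/subsetP => i.
  by rewrite !inE /mk3; case: (P i); case: (Q i).
- apply: leq_trans H2 _; apply: subset_leq_card; apply/subsetP => i.
  by rewrite !inE /mk3; case: (P i); case: (Q i).
Qed.

Lemma nf' n (e : rel (vtx n 2)) : stable_tree e -> exists g, e = ptree g.
Proof. move=> st; exists (g2 e); exact: nf. Qed.

Lemma ext_fw n (Z : assignment n) k k' e e' pi : extremal_assignment Z ->
  stable_tree e -> stable_tree e' -> contraction e e' pi ->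
  forall v', v' \in Z k' e' -> forall u, pi u = v' -> u \in Z k e.
Proof.
case=> _ HZ st st' c v' Hv u Hu; move: Hv; rewrite (HZ _ _ _ _ _ st st' c v').
by move/forallP/(_ u)/implyP; apply; apply/eqP.
Qed.

Lemma ext_bw n (Z : assignment n) k k' e e' pi : extremal_assignment Z ->
  stable_tree e -> stable_tree e' -> contraction e e' pi ->
  forall v', (forall u, pi u = v' -> u \in Z k e) -> v' \in Z k' e'.
Proof.
case=> _ HZ st st' c v' H; rewrite (HZ _ _ _ _ _ st st' c v').
by apply/forallP => u; apply/implyP => /eqP; exact: H.
Qed.

Lemma pB_mk3 n (P Q : pred 'I_n) i : (pB o20 (mk3 P Q i) == o21) = ~~ P i && Q i.
Proof. by rewrite /mk3; case: (P i); case: (Q i). Qed.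

Theorem lemma7p6 (n : nat) (Z : assignment n) :
  extremal_assignment Z -> contraction_indicator (C_of Z).
Proof.
move=> HZ; have [HZ1 _] := HZ.
split.
- move=> B [e [v [st _ vin ->]]]; case: (nf' st) => g ?; subst e.
  have H1 := stable2_inv v st; have H2 := stable2_inv (other v) st.
  have -> : [set i | ptree g (inl i) (inr v)] = [set i | g i == v] by apply/setP => i; rewrite !inE.
  have E : [set i | g i == other v] = ~: [set i | g i == v] by apply/setP=> i; rewrite !inE other_eq.
  have := cardsC [set i | g i == v]; rewrite -E card_ord => Hn.
  apply/andP; split => //; move: H2 Hn; set a := #|[set i | g i == v]|; set b := #|[set i | g i == other v]| => H2 Hn; lia.
- move=> B B' [e [v [st nz vin HB]]] sub cB'.
  case: (nf' st) => g ?; subst e.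
  have HB' : forall i, i \in B -> g i == v by move=> i; rewrite HB inE.
  case: (eqVneq B' B) => [-> | neq]; first by exists (ptree g), v; split.
  have /properP [_ [j jB jB']] : B' \proper B by rewrite properEneq neq sub.
  pose f := mk3 (fun i => g i != v) (fun i => i \in B').
  have sT : stable_tree (ptree f).
    apply: stable3.
    - have -> : [set i | g i != v] = [set i | g i == other v] by apply/setP=> i; rewrite !inE other_eq.
      exact: stable2_inv.
    - have -> : [set i | ~~ (g i != v) && (i \in B')] = B'; last by [].
      apply/setP => i; rewrite !inE negbK; case: (boolP (i \in B')) => Hi; rewrite ?andbF // andbT.
      exact: HB' (subsetP sub _ Hi).
    - apply/card_gt0P; exists j; by rewrite inE negbK (HB' _ jB) jB'.
  have Eg : (fun i => pA v (f i)) = g.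
    apply: functional_extensionality => i; rewrite /f /mk3.
    case E1: (g i == v) => /=.
    + by rewrite (eqP E1); case: (i \in B').
    + by apply/eqP; rewrite eq_sym other_eq E1.
  have c1 := contrA f v; rewrite Eg in c1.
  have z31 : o31 \in Z 3 (ptree f) by apply: (ext_fw HZ sT st c1 vin).
  have z32 : o32 \in Z 3 (ptree f) by apply: (ext_fw HZ sT st c1 vin).
  pose f' := fun i => pB o20 (f i).
  have c2 := contrB f o20.
  have sT' : stable_tree (ptree f').
    apply: stable2.
    - apply: leq_trans (stable2_inv (other v) st) _; apply: subset_leq_card; apply/subsetP => i.
      rewrite !inE other_eq /f' /f /mk3 => ->; by [].
    - apply: leq_trans cB' _; apply: subset_leq_card; apply/subsetP => i.
      rewrite !inE /f' /f pB_mk3 => Hi; by rewrite Hi (HB' _ (subsetP sub _ Hi)).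
  have z : o21 \in Z 2 (ptree f').
    apply: (ext_bw HZ sT sT' c2) => u; enum3 u => // _.
  exists (ptree f'), o21; split => //.
  + by apply/set0Pn; exists o21.
  + apply/setP => i; rewrite inE /= /f' /f pB_mk3 negbK.
    case: (boolP (i \in B')) => Hi; rewrite ?andbF // andbT.
    by rewrite (HB' _ (subsetP sub _ Hi)).
- move=> B1 B2 [e1 [v1 [st1 _ vin1 HB1]]] [e2 [v2 [st2 _ vin2 HB2]]].
  case: (nf' st1) => g1 ?; subst e1; case: (nf' st2) => g2 ?; subst e2. subst B1 B2.
  apply/negP => /eqP HU.
  have U : forall i, (g1 i == v1) || (g2 i == v2).
    move=> i; have Hi : i \in [set i | ptree g1 (inl i) (inr v1)] :|: [set i | ptree g2 (inl i) (inr v2)] by rewrite HU in_setT.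
    move: Hi.
    by rewrite !inE.
  case: (boolP [exists i, (g1 i == v1) && (g2 i == v2)]) => [/existsP [j /andP [j1 j2]] | /existsPn Hno].
  + pose f := mk3 (fun i => g1 i != v1) (fun i => g2 i != v2).
    have sT : stable_tree (ptree f).
      apply: stable3.
      * have -> : [set i | g1 i != v1] = [set i | g1 i == other v1] by apply/setP=> i; rewrite !inE other_eq.
        exact: stable2_inv.
      * have -> : [set i | ~~ (g1 i != v1) && (g2 i != v2)] = [set i | g2 i == other v2].
          apply/setP=> i; rewrite !inE other_eq; move: (U i).
          by case: (g1 i == v1); case: (g2 i == v2).
        exact: stable2_inv.
      * apply/card_gt0P; exists j; by rewrite inE j1 j2.
    have E1 : (fun i => pA v1 (f i)) = g1.
      apply: functional_extensionality => i; rewrite /f /mk3.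
      case F1: (g1 i == v1) => /=.
      -- by rewrite (eqP F1); case: (g2 i != v2).
      -- by apply/eqP; rewrite eq_sym other_eq F1.
    have E2 : (fun i => pB v2 (f i)) = g2.
      apply: functional_extensionality => i; rewrite /f /mk3; move: (U i).
      case F1: (g1 i == v1); case F2: (g2 i == v2) => //= _.
      -- by rewrite (eqP F2).
      -- by apply/eqP; rewrite eq_sym other_eq F2.
      -- by rewrite (eqP F2).
    have c1 := contrA f v1; rewrite E1 in c1.
    have c2 := contrB f v2; rewrite E2 in c2.
    have z31 : o31 \in Z 3 (ptree f) by apply: (ext_fw HZ sT st1 c1 vin1).
    have z32 : o32 \in Z 3 (ptree f) by apply: (ext_fw HZ sT st1 c1 vin1).
    have z30 : o30 \in Z 3 (ptree f) by apply: (ext_fw HZ sT st2 c2 vin2).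
    have := HZ1 _ _ sT; apply/negP/negPn/eqP/setP => u; rewrite inE; by enum3 u.
  + have E : (fun i => sw v1 v2 (g1 i)) = g2.
      apply: functional_extensionality => i; rewrite /sw; move: (U i) (Hno i).
      case F1: (g1 i == v1); case F2: (g2 i == v2) => //= _ _.
      -- by apply/eqP; rewrite eq_sym other_eq F2.
      -- by rewrite (eqP F2).
    have c := contrS g1 v1 v2; rewrite E in c.
    have zo : other v1 \in Z 2 (ptree g1).
      by apply: (ext_fw HZ st1 st2 c vin2); rewrite /sw other_neq.
    have := HZ1 _ _ st1; apply/negP/negPn/eqP/setP => u; rewrite inE.
    case: (eqVneq u v1) => [-> //|ne].
    by have /eqP -> : u == other v1 by rewrite other_eq.
Qed.
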